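(* Let $\alpha$ be irrational and $n\ge1$. Then $$D^*(\beta_\alpha)\le \max_{s\in[n]}d^*(\mathcal{A}_s(\alpha))+d^*(\mathcal{A}_n(\alpha))\le 2\max_{s\in[n]}d^*(\mathcal{A}_s(\alpha)).$$
   Context: $[n]=\{1,\dots,n\}$ and $\{x\}$ denotes the fractional part of $x$. For irrational $\alpha$, the Sós permutation $\beta_\alpha$ of $[n]$ is defined by $\beta_\alpha(t)=|\{s\in[n]:\{\alpha s\}\le\{\alpha t\}\}|$ (so $\beta_\alpha(s)<\beta_\alpha(t)$ iff $\{\alpha s\}<\{\alpha t\}$). $D^*(\beta_\alpha)=\max_{s,t\in[n]}\bigl|\,|\beta_\alpha([s])\cap[t]|-st/n\,\bigr|$. For $s\ge1$, $\mathcal{A}_s(\alpha)=\{\{\alpha x\}:x\in[s]\}$, and for a finite set $A\subset[0,1]$, $d^*(A)=\sup_{0\le x\le1}\bigl|\,|A\cap[0,x]|-x|A|\,\bigr|$. *)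

(* Defs.v *)
From HB Require Import structures.
From mathcomp Require Import all_boot all_order all_algebra.
From mathcomp Require Import all_classical all_reals.
Set Implicit Arguments. Unset Strict Implicit. Unset Printing Implicit Defensive.
Import Order.TTheory GRing.Theory Num.Theory.
Local Open Scope ring_scope.
Local Open Scope classical_set_scope.

Definition frac {R : realType} (x : R) : R := x - (Num.floor x)%:~R.

Definition sos_perm {R : realType} (a : R) (n t : nat) : nat :=
  count (fun s : nat => frac (a * s%:R) <= frac (a * t%:R)) (iota 1 n).

(* |beta([s]) cap [t]| = #{u in [s] : beta(u) <= t} *)
Definition sos_count {R : realType} (a : R) (n s t : nat) : nat :=
  count (fun u : nat => (sos_perm a n u <= t)%N) (iota 1 s).

Definition Dstar {R : realType} (a : R) (n : nat) : R :=
  \big[Num.max/0]_(s <- iota 1 n) \big[Num.max/0]_(t <- iota 1 n)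
     `| (sos_count a n s t)%:R - (s * t)%:R / n%:R |.

Definition Aset {R : realType} (a : R) (s : nat) : seq R :=
  undup [seq frac (a * x%:R) | x <- iota 1 s].

Definition dstar {R : realType} (A : seq R) : R :=
  sup [set y : R | exists2 x : R, 0 <= x <= 1 &
        y = `| (count (fun a => (0 <= a) && (a <= x)) A)%:R - x * (size A)%:R |].

Definition maxdstar {R : realType} (a : R) (n : nat) : R :=
  \big[Num.max/0]_(s <- iota 1 n) dstar (Aset a s).

(* Main.v *)
Require Import Defs.
From HB Require Import structures.
From mathcomp Require Import all_boot all_order all_algebra.
From mathcomp Require Import all_classical all_reals.
From mathcomp Require Import ring lra.
Import Order.TTheory GRing.Theory Num.Theory.
Local Open Scope ring_scope.

Section S.
Variable R : realType.

Lemma frac_ge0 (x : R) : 0 <= Defs.frac x.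
Proof. by rewrite /Defs.frac subr_ge0 floor_le. Qed.

Lemma frac_lt1 (x : R) : Defs.frac x < 1.
Proof. rewrite /Defs.frac ltrBlDl; have := floorD1_gt x; by rewrite intrD addrC. Qed.

Lemma frac_inj (a : R) u v : irrational a -> Defs.frac (a * u%:R) = Defs.frac (a * v%:R) -> u = v.
Proof.
move=> ia.
wlog uv : u v / (v <= u)%N.
  move=> H E; case: (leqP v u) => h; first exact: H.
  by apply/esym/H => //; apply: ltnW.
move=> E; apply/eqP; rewrite eqn_leq uv andbT leqNgt; apply/negP => vu.
apply: ia; apply/rationalP.
exists (Num.floor (a * u%:R) - Num.floor (a * v%:R)), (u - v)%N.
move: E; rewrite /Defs.frac.
set fu := Num.floor (a * u%:R); set fv := Num.floor (a * v%:R) => /eqP; rewrite subr_eq => /eqP E.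
have h0 : (u - v)%:R != 0 :> R by rewrite pnatr_eq0 subn_eq0 -ltnNge.
apply: (mulIf h0); rewrite mulfVK // natrB 1?ltnW // intrB mulrBr E; ring.
Qed.
Lemma count_lt (T : eqType) (p q : pred T) (s : seq T) x :
  subpred p q -> x \in s -> q x -> ~~ p x -> (count p s < count q s)%N.
Proof.
move=> pq; elim: s => // y s IH; rewrite in_cons /= => /orP [/eqP ->|xs] qx px.
  rewrite qx (negbTE px) add0n add1n ltnS; exact: sub_count.
have := IH xs qx px; case: (p y) (pq y) => [->//|_]; rewrite add0n => h.
exact: (leq_trans h (leq_addl _ _)).
Qed.

Variables (a : R) (n : nat).
Hypothesis ia : irrational a.
Local Notation fr x := (Defs.frac (a * x%:R)).
Local Notation beta := (sos_perm a n).

Lemma beta_le u v : fr u <= fr v -> (beta u <= beta v)%N.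
Proof. by move=> h; apply: sub_count => w /= /le_trans; apply. Qed.

Lemma beta_lt u v : v \in iota 1 n -> fr u < fr v -> (beta u < beta v)%N.
Proof.
move=> vn h; apply: (@count_lt _ _ _ _ v) => //=.
- by move=> w /= /le_trans; apply; apply: ltW.
- by rewrite -ltNge.
Qed.

Lemma beta_leE u v : v \in iota 1 n -> u \in iota 1 n -> (beta u <= beta v)%N = (fr u <= fr v).
Proof.
move=> vn un; case: (lerP (fr u) (fr v)) => h; first by rewrite beta_le.
by apply/negbTE; rewrite -ltnNge beta_lt.
Qed.

Lemma beta_inj : {in iota 1 n &, injective beta}.
Proof.
move=> u v un vn e; apply: (@frac_inj a u v ia); apply/eqP; rewrite eq_le.
by rewrite -!beta_leE // e leqnn.
Qed.

Lemma beta_range v : v \in iota 1 n -> (1 <= beta v <= n)%N.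
Proof.
move=> vn; apply/andP; split; last by rewrite -[n in (_ <= n)%N](size_iota 1 n) count_size.
by rewrite -has_count; apply/hasP; exists v.
Qed.

Lemma beta_surj t : (1 <= t <= n)%N -> exists2 v, v \in iota 1 n & beta v = t.
Proof.
move=> tn.
have [_ eqs] : (size (map beta (iota 1 n)) = size (iota 1 n)) * (map beta (iota 1 n) =i iota 1 n).
  apply: uniq_min_size; first by rewrite map_inj_in_uniq ?iota_uniq //; apply: beta_inj.
    move=> x /mapP [v vn ->]; rewrite mem_iota add1n ltnS; exact: beta_range.
  by rewrite size_map.
have : t \in map beta (iota 1 n) by rewrite eqs mem_iota add1n ltnS.
by move=> /mapP [v vn ->]; exists v.
Qed.

Lemma Aset_uniq s : uniq [seq fr x | x <- iota 1 s].
Proof. by rewrite map_inj_in_uniq ?iota_uniq // => u v _ _; apply: frac_inj. Qed.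

Lemma Aset_size s : size (Aset a s) = s.
Proof. by rewrite /Aset undup_id ?Aset_uniq // size_map size_iota. Qed.

Lemma Aset_count s x :
  count (fun y => (0 <= y) && (y <= x)) (Aset a s) = count (fun u => fr u <= x) (iota 1 s).
Proof. by rewrite /Aset undup_id ?Aset_uniq // count_map; apply: eq_count => u /=; rewrite frac_ge0. Qed.

Lemma dstar_ge (A : seq R) x : 0 <= x <= 1 ->
  `| (count (fun y => (0 <= y) && (y <= x)) A)%:R - x * (size A)%:R | <= dstar A.
Proof.
move=> /andP [x0 x1]; apply: sup_upper_bound; last by exists x => //; apply/andP.
split; first by exists (`| (count (fun y => (0 <= y) && (y <= x)) A)%:R - x * (size A)%:R |), x => //; apply/andP.
exists ((size A)%:R *+ 2) => y [z /andP [z0 z1] ->].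
have c0 : 0 <= (count (fun y => (0 <= y) && (y <= z)) A)%:R :> R by [].
have c1 : (count (fun y => (0 <= y) && (y <= z)) A)%:R <= (size A)%:R :> R by rewrite ler_nat count_size.
rewrite ler_norml mulr2n; apply/andP; split; nra.
Qed.

Lemma dstar_ge0 (A : seq R) : 0 <= dstar A.
Proof. apply: le_trans (@dstar_ge A 0 _); [exact: normr_ge0 | by rewrite lexx ler01]. Qed.


Lemma key_ineq (c s t N x d1 d2 : R) : 0 < N -> 0 <= s <= N ->
  `|c - x * s| <= d1 -> `|t - x * N| <= d2 -> `|c - s * t / N| <= d1 + d2.
Proof.
move=> N0 /andP [s0 sN] /ler_normlP [h1 h2] /ler_normlP [h3 h4].
have d20 : 0 <= d2 by lra.
have -> : c - s * t / N = ((c - x * s) * N + s * (x * N - t)) / N by field; rewrite gt_eqF.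
rewrite normrM normfV (gtr0_norm N0) ler_pdivrMr //.
apply: le_trans (ler_normD _ _) _; rewrite [X in _ <= X]mulrDl !normrM (ger0_norm s0).
apply: lerD; first by rewrite (gtr0_norm N0) ler_pM2r //; apply/ler_normlP; split; lra.
apply: (@le_trans _ _ (N * d2)); last by rewrite mulrC.
apply: ler_pM => //; rewrite distrC; apply/ler_normlP; split; lra.
Qed.

End S.

Lemma bigmax_ge (R : realType) (T : eqType) (r : seq T) (F : T -> R) i :
  i \in r -> F i <= \big[Num.max/0]_(j <- r) F j.
Proof.
elim: r => // y r IH; rewrite in_cons big_cons le_max => /orP [/eqP ->|ir].
  by rewrite lexx.
by rewrite IH // orbT.
Qed.

Lemma bigmax_le (R : realType) (T : eqType) (r : seq T) (F : T -> R) c :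
  0 <= c -> (forall i, i \in r -> F i <= c) -> \big[Num.max/0]_(j <- r) F j <= c.
Proof.
move=> c0; elim: r => [|y r IH] H; first by rewrite big_nil.
rewrite big_cons ge_max H ?mem_head //= IH // => i ir; apply: H; by rewrite in_cons ir orbT.
Qed.

Theorem mainTheorem11 (R : realType) (a : R) (n : nat) :
  @irrational R a -> (1 <= n)%N ->
  Dstar a n <= maxdstar a n + dstar (Aset a n) /\
  maxdstar a n + dstar (Aset a n) <= 2 * maxdstar a n.
Proof.
move=> ia n1.
have nn : n \in iota 1 n by rewrite mem_iota add1n ltnS n1 leqnn.
have dA : dstar (Aset a n) <= maxdstar a n by rewrite /maxdstar; exact: (@bigmax_ge R nat (iota 1 n) (fun s => dstar (Aset a s)) n nn).

have m0 : 0 <= maxdstar a n := le_trans (dstar_ge0 _ _) dA.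
split; last by rewrite mulr2n mulrDl mul1r lerD2l.
have c0 : 0 <= maxdstar a n + dstar (Aset a n) by rewrite addr_ge0 // (dstar_ge0 R).
apply: bigmax_le => // s sn; apply: bigmax_le => // t tn.
move: (sn) (tn); rewrite !mem_iota !add1n !ltnS => /andP [s1 sn'] tn'.
have [v vn bv] := @beta_surj R a n ia t tn'.
set x := Defs.frac (a * v%:R).
have x01 : 0 <= x <= 1 by rewrite frac_ge0 ltW // frac_lt1.
have E1 : sos_count a n s t = count (fun u => Defs.frac (a * u%:R) <= x) (iota 1 s).
  rewrite /sos_count -bv; apply: eq_in_count => u us; apply: beta_leE => //.
  by move: us; rewrite !mem_iota => /andP [-> /leq_trans]; apply; rewrite leq_add2l.
have E2 : t = count (fun u => Defs.frac (a * u%:R) <= x) (iota 1 n) by rewrite -bv.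
rewrite E1 natrM; apply: (@key_ineq R _ _ _ _ x).
- by rewrite ltr0n.
- by rewrite ler0n ler_nat.
- have H := @dstar_ge R (Aset a s) x x01.
  rewrite Aset_count // Aset_size // in H; apply: le_trans H _.
  by rewrite /maxdstar; exact: (@bigmax_ge R nat (iota 1 n) (fun s => dstar (Aset a s)) s sn).

- have := @dstar_ge R (Aset a n) x x01; by rewrite Aset_count // Aset_size // -E2.
Qed.
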